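(* There is no graph $H$ on five vertices such that every $H$-free graph $G$ is $(\chi(G)+1)$-mixing.
   Context: All graphs are finite and simple. $\chi(G)$ is the chromatic number. The reconfiguration graph $\mathcal{R}_k(G)$ has the proper $k$-colourings of $G$ (colours $\{1,\dots,k\}$) as vertices, two being adjacent if they differ on exactly one vertex; $G$ is $k$-mixing if $\mathcal{R}_k(G)$ is connected. $G$ is $H$-free if it has no induced subgraph isomorphic to $H$. *)

(* Defs.v *)
From mathcomp Require Import all_boot.
Set Implicit Arguments. Unset Strict Implicit. Unset Printing Implicit Defensive.

Definition simple_graph (T : finType) (e : rel T) : Prop :=
  symmetric e /\ irreflexive e.

Definition has_induced (U T : finType) (h : rel U) (e : rel T) : Prop :=
  exists f : U -> T, injective f /\ forall x y, h x y = e (f x) (f y).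

Definition H_free (U T : finType) (h : rel U) (e : rel T) : Prop :=
  ~ has_induced h e.

(* Proper k-colourings, colours 'I_k (= {0,..,k-1}, a relabelling of {1..k}). *)
Definition proper (T : finType) (e : rel T) {k : nat} (c : {ffun T -> 'I_k}) : bool :=
  [forall x, forall y, e x y ==> (c x != c y)].

Definition colorable (T : finType) (e : rel T) (k : nat) : bool :=
  [exists c : {ffun T -> 'I_k}, proper e c].

(* Chromatic number: least k with a proper k-colouring (k = #|T| always works). *)
Definition chi (T : finType) (e : rel T) : nat :=
  find (colorable e) (iota 0 #|T|.+1).

Definition recon_rel (T : finType) (e : rel T) (k : nat) : rel {ffun T -> 'I_k} :=
  fun c d => [&& proper e c, proper e d & #|[pred v | c v != d v]| == 1].

Definition mixing (T : finType) (e : rel T) (k : nat) : Prop :=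
  forall c d : {ffun T -> 'I_k}, proper e c -> proper e d ->
    connect (recon_rel e (k:=k)) c d.

(* Main.v *)
From Stdlib Require Import Classical.
Require Import Defs.
From mathcomp Require Import all_boot.
Import Defs.
Set Implicit Arguments. Unset Strict Implicit. Unset Printing Implicit Defensive.

Definition pat (U : finType) (r : rel U) a b c d :=
  [&& r a b, r c d, ~~ r a c, ~~ r a d, ~~ r b c & ~~ r b d].

Definition frozen (T : finType) (e : rel T) k (c : {ffun T -> 'I_k}) :=
  forall v (col : 'I_k), col != c v -> exists2 u, e v u & c u = col.

Lemma allNP n (P : nat -> bool) : all P (iota 0 n) -> forall i : 'I_n, P i.
Proof. by move/allP => H i; apply: H; rewrite mem_iota /=. Qed.

Lemma frozen_no_step (T : finType) (e : rel T) k (c d : {ffun T -> 'I_k}) :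
  irreflexive e -> frozen e c -> recon_rel e c d -> False.
Proof.
move=> irr fr /and3P[_ pd /eqP h1].
have : 0 < #|[pred v | c v != d v]| by rewrite h1.
case/card_gt0P => v; rewrite inE => hv.
have hv2 : d v != c v by rewrite eq_sym.
have [u evu cu] := fr v (d v) hv2.
have uv : u != v by apply/eqP => uv; move: evu; rewrite uv irr.
have h0 : #|[predD1 [pred v | c v != d v] & v]| = 0.
  by move: h1; rewrite (cardD1 v) inE hv => -[].
have := card0_eq h0 u; rewrite !inE uv /= cu => /negbFE/eqP du.
move/forallP: pd => /(_ v)/forallP/(_ u); rewrite evu /= du eqxx.
by [].
Qed.

Lemma not_mixing_frozen (T : finType) (e : rel T) k (c d : {ffun T -> 'I_k}) :
  irreflexive e -> proper e c -> proper e d -> c != d -> frozen e c -> ~ mixing e k.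
Proof.
move=> irr pc pd cd fr mix.
have /connectP[p hp hd] := mix c d pc pd.
case: p hp hd => [|x p] /=.
  by move=> _ dc; rewrite dc eqxx in cd.
by case/andP => /(frozen_no_step irr fr).
Qed.

Lemma clique_not_colorable (T : finType) (e : rel T) m k (v : 'I_m -> T) :
  (forall i j, i != j -> e (v i) (v j)) -> k < m -> ~~ colorable e k.
Proof.
move=> cl km; apply/negP => /existsP[c /forallP pc].
have inj : injective (fun i => c (v i)).
  move=> i j /eqP h; apply/eqP; apply: contraTT h => ij.
  by have /forallP/(_ (v j)) := pc (v i); rewrite cl.
have H := inj_leq _ inj.
by move: (leq_trans km H); rewrite ltnn.
Qed.

Lemma find_iota (p : pred nat) n : forall s m,
  (forall k, k < n -> ~~ p k) -> p n -> s <= n -> n < s + m ->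
  find p (iota s m) = n - s.
Proof.
move=> s m; elim: m s => [|m IH] s hlt pn sn nm; first by rewrite addn0 ltnNge sn in nm.
rewrite /= ; case: (ltnP s n) => sn'.
  rewrite (negbTE (hlt _ sn')) IH //; last by rewrite addSnnS.
  by rewrite subnS prednK // subn_gt0.
have -> : s = n by apply/eqP; rewrite eqn_leq sn sn'.
by rewrite pn subnn.
Qed.

Lemma chi_eq (T : finType) (e : rel T) n :
  (forall k, k < n -> ~~ colorable e k) -> colorable e n -> n <= #|T| -> chi e = n.
Proof.
move=> hlt hn hT; rewrite /chi (find_iota hlt hn) ?subn0 //.
Qed.

Definition ordm k (hk : 0 < k) (x : nat) : 'I_k := Ordinal (ltn_pmod x hk).

Lemma proper_of n k (hk : 0 < k) (en : nat -> nat -> bool) (fn : nat -> nat) :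
  all (fun x => all (fun y => en x y ==> (fn x %% k != fn y %% k)) (iota 0 n)) (iota 0 n) ->
  proper (fun i j : 'I_n => en i j) [ffun i : 'I_n => ordm hk (fn i)].
Proof.
move=> H; apply/forallP => x; apply/forallP => y; rewrite !ffunE.
apply/implyP => exy; move/implyP: (allNP (allNP H x) y) => /(_ exy).
by apply: contra => /eqP/(congr1 val) /= ->.
Qed.

Lemma frozen_of n k (hk : 0 < k) (en : nat -> nat -> bool) (fn : nat -> nat) :
  all (fun v => all (fun col => (col != fn v %% k) ==>
     has (fun u => en v u && (fn u %% k == col)) (iota 0 n)) (iota 0 k)) (iota 0 n) ->
  frozen (fun i j : 'I_n => en i j) [ffun i : 'I_n => ordm hk (fn i)].
Proof.
move=> H v col; rewrite !ffunE => hc.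
have hc' : val col != fn v %% k by apply: contra hc => /eqP hc; apply/eqP/val_inj.
have := allNP (allNP H v) col; rewrite hc' /= => /hasP[u].
rewrite mem_iota add0n /= => un /andP[evu /eqP fu].
exists (Ordinal un) => //; rewrite ffunE; apply: val_inj => /=; exact: fu.
Qed.

Lemma simple_of n (en : nat -> nat -> bool) :
  all (fun x => ~~ en x x && all (fun y => en x y == en y x) (iota 0 n)) (iota 0 n) ->
  simple_graph (fun i j : 'I_n => en i j).
Proof.
move=> H; split.
  by move=> x y; have /andP[_ /allNP/(_ y)/eqP] := allNP H x.
by move=> x; have /andP[/negbTE] := allNP H x.
Qed.

Definition patn (r : nat -> nat -> bool) a b c d :=
  [&& r a b, r c d, ~~ r a c, ~~ r a d, ~~ r b c & ~~ r b d].

Definition c6n (i j : nat) := (j == i.+1 %% 6) || (i == j.+1 %% 6).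
Definition c6 : rel 'I_6 := fun i j => c6n i j.
Definition h6 : 0 < 6 := isT.
Definition h3 : 0 < 3 := isT.
Definition h2 : 0 < 2 := isT.

Lemma c6_pat : all (fun m => [&& (m + 1) %% 6 != m, (m + 2) %% 6 != m, (m + 4) %% 6 != m,
   (m + 5) %% 6 != m & patn c6n ((m + 1) %% 6) ((m + 2) %% 6) ((m + 4) %% 6) ((m + 5) %% 6)])
   (iota 0 6).
Proof. by vm_compute. Qed.

Lemma c6_simple : simple_graph c6.
Proof. by apply: (@simple_of _ c6n); vm_compute. Qed.
Lemma c6_p1 : proper c6 [ffun i : 'I_6 => ordm h3 i].
Proof. by apply: (@proper_of _ _ h3 c6n (fun i => i)); vm_compute. Qed.
Lemma c6_p2 : proper c6 [ffun i : 'I_6 => ordm h3 (i + 1)].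
Proof. by apply: (@proper_of _ _ h3 c6n (fun i => i + 1)); vm_compute. Qed.
Lemma c6_p3 : proper c6 [ffun i : 'I_6 => ordm h2 i].
Proof. by apply: (@proper_of _ _ h2 c6n (fun i => i)); vm_compute. Qed.
Lemma c6_fr : frozen c6 [ffun i : 'I_6 => ordm h3 i].
Proof. by apply: (@frozen_of _ _ h3 c6n (fun i => i)); vm_compute. Qed.
Lemma c6_neq : [ffun i : 'I_6 => ordm h3 i] != [ffun i : 'I_6 => ordm h3 (i + 1)].
Proof.
apply/eqP => /(congr1 (fun f : {ffun 'I_6 -> 'I_3} => val (f ord0))); rewrite !ffunE.
by vm_compute.
Qed.

(* G2: complement of the line graph of the subdivided diamond *)
Definition ep (n : nat) : nat := nth 0 [:: 0;1;0;2;1;2;1;3;2;3] n.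
Definition g2n (i j : nat) := (i %/ 2 != j %/ 2) && (ep i != ep j).
Definition g2 : rel 'I_10 := fun i j => g2n i j.
Definition h10 : 0 < 10 := isT.
Definition h5 : 0 < 5 := isT.
Definition h4 : 0 < 4 := isT.
Definition cl4 (i : 'I_4) : 'I_10 := ordm h10 (nth 0 [:: 0; 4; 8; 7] i).

Lemma g2_simple : simple_graph g2.
Proof. by apply: (@simple_of _ g2n); vm_compute. Qed.
Lemma g2_p1 : proper g2 [ffun i : 'I_10 => ordm h5 (i %/ 2)].
Proof. by apply: (@proper_of _ _ h5 g2n (fun i => i %/ 2)); vm_compute. Qed.
Lemma g2_p2 : proper g2 [ffun i : 'I_10 => ordm h5 (ep i)].
Proof. by apply: (@proper_of _ _ h5 g2n ep); vm_compute. Qed.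
Lemma g2_p3 : proper g2 [ffun i : 'I_10 => ordm h4 (ep i)].
Proof. by apply: (@proper_of _ _ h4 g2n ep); vm_compute. Qed.
Lemma g2_fr : frozen g2 [ffun i : 'I_10 => ordm h5 (i %/ 2)].
Proof. by apply: (@frozen_of _ _ h5 g2n (fun i => i %/ 2)); vm_compute. Qed.
Lemma g2_neq : [ffun i : 'I_10 => ordm h5 (i %/ 2)] != [ffun i : 'I_10 => ordm h5 (ep i)].
Proof.
apply/eqP => /(congr1 (fun f : {ffun 'I_10 -> 'I_5} => val (f (Ordinal (isT : 1 < 10))))); rewrite !ffunE.
by vm_compute.
Qed.
Lemma g2_cl_b : all (fun i => all (fun j => (i != j) ==>
   g2n (nth 0 [:: 0; 4; 8; 7] i %% 10) (nth 0 [:: 0; 4; 8; 7] j %% 10)) (iota 0 4)) (iota 0 4).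
Proof. by vm_compute. Qed.
Lemma g2_cl i j : i != j -> g2 (cl4 i) (cl4 j).
Proof.
move=> ij; have := allNP (allNP g2_cl_b i) j; rewrite (_ : (val i != val j) = true) //.
Qed.

Lemma g2_free_b : all (fun a => all (fun b => all (fun c => all (fun d =>
  ~~ patn g2n a b c d) (iota 0 10)) (iota 0 10)) (iota 0 10)) (iota 0 10).
Proof. by vm_compute. Qed.

Theorem lemma5 :
  forall h : rel 'I_5, simple_graph h ->
    exists (T : finType) (e : rel T),
      simple_graph e /\ H_free h e /\ ~ mixing e (chi e).+1.
Proof.
move=> h _.
case: (classic (exists a b c d, pat h a b c d)) => [[a [b [c [d hp]]]]|nop].
- have irr : irreflexive g2 by case: g2_simple.
  exists 'I_10, g2; split; first exact: g2_simple.
  split.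
  + move=> [f [_ hf]]; move: hp; rewrite /pat !hf => hp.
    have := allNP (allNP (allNP (allNP g2_free_b (f a)) (f b)) (f c)) (f d).
    by rewrite /patn /g2 in hp *; rewrite hp.
  have -> : chi g2 = 4.
    apply: chi_eq => //; last by rewrite card_ord.
      move=> k k4; apply: (@clique_not_colorable _ _ 4 k cl4) => // i j ij.
      exact: g2_cl.
    by apply/existsP; exists [ffun i : 'I_10 => ordm h4 (ep i)]; exact: g2_p3.
  exact: (not_mixing_frozen irr g2_p1 g2_p2 g2_neq g2_fr).
- have irr : irreflexive c6 by case: c6_simple.
  exists 'I_6, c6; split; first exact: c6_simple.
  split.
  + move=> [f [inj hf]]; apply: nop.
    have cardim : #|f @: setT| = 5 by rewrite card_imset // cardsT card_ord.
    have : #|~: (f @: setT)| = 1.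
      have := cardsC (f @: setT); rewrite cardim card_ord => /eqP.
      by rewrite -[6]/(5 + 1) eqn_add2l => /eqP.
    move/eqP/cards1P => [m hm].
    have pre : forall v, v != m -> exists x, f x = v.
      move=> v vm; have : v \notin ~: (f @: setT) by rewrite hm inE.
      by rewrite inE negbK => /imsetP[x _ ->]; exists x.
    have /and5P[n1 n2 n4 n5 hp] := allNP c6_pat m.
    have [a fa] := pre (ordm h6 (m + 1)) n1; have [b fb] := pre (ordm h6 (m + 2)) n2.
    have [c fc] := pre (ordm h6 (m + 4)) n4; have [d fd] := pre (ordm h6 (m + 5)) n5.
    by exists a, b, c, d; rewrite /pat !hf fa fb fc fd.
  have -> : chi c6 = 2.
    apply: chi_eq => //; last by rewrite card_ord.
      move=> k k2; apply: (@clique_not_colorable _ _ 2 k (fun i : 'I_2 => ordm h6 i)) => // i j ij.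
      by case: i j ij => [[|[|//]] ?] [[|[|//]] ?].
    by apply/existsP; exists [ffun i : 'I_6 => ordm h2 i]; exact: c6_p3.
  exact: (not_mixing_frozen irr c6_p1 c6_p2 c6_neq c6_fr).
Qed.
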